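(* Let $Q$ be a quiver of rank $3$ with no frozen vertices which is mutation-abundant, and let $\mathbf M=m_1m_2\cdots$ be an infinite reduced mutation sequence. Then exactly one of the following holds: (1) $Q^{(i)}_{\mathbf M}$ is acyclic for all sufficiently large $i$ (and then every sufficiently late mutation $m_i$ is at a source or sink of $Q^{(i-1)}_{\mathbf M}$); or (2) $Q^{(i)}_{\mathbf M}$ is an oriented 3-cycle for all sufficiently large $i$. In either case there is $i_0$ such that $m_i$ is cycle-preserving for $Q^{(i-1)}_{\mathbf M}$ for all $i>i_0$.
   Context: A quiver is a finite directed multigraph with no loops and no oriented 2-cycles; here all vertices are mutable. $Q|_S$ is the induced subquiver on $S$. Mutation $\mu_j$: for each path $i\to j\to k$ with $a$ arrows $i\to j$ and $b$ arrows $j\to k$ add $ab$ arrows $i\to k$, reverse all arrows at $j$, cancel 2-cycles. A mutation sequence $\mathbf M=m_1m_2\cdots$ has $Q^{(0)}_{\mathbf M}=Q$, $Q^{(i)}_{\mathbf M}=\mu_{m_i}(Q^{(i-1)}_{\mathbf M})$; reduced means $m_i\ne m_{i+1}$. A quiver without frozen vertices is mutation-abundant if every quiver mutation-equivalent to it has at least 2 arrows between every pair of vertices. A 3-vertex quiver is an oriented 3-cycle if its underlying directed graph is not acyclic. A vertex $j$ is cycle-preserving for $Q$ if whenever $Q|_{\{i,j,k\}}$ is an oriented 3-cycle containing $j$, so is $\mu_j(Q)|_{\{i,j,k\}}$. *)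

(* Defs.v *)
From mathcomp Require Import all_boot.
Set Implicit Arguments. Unset Strict Implicit. Unset Printing Implicit Defensive.

(* A quiver on the vertex set 'I_n (all vertices mutable), given by its
   arrow counts: Q i j = number of arrows i -> j. *)
Definition quiver (n : nat) := 'I_n -> 'I_n -> nat.

Definition wf_quiver n (Q : quiver n) : Prop :=
  (forall i, Q i i = 0) /\ (forall i j, Q i j = 0 \/ Q j i = 0).

(* Quiver mutation at j: arrows at j are reversed; for i,k <> j we add
   Q i j * Q j k arrows i -> k (paths i -> j -> k) and then cancel 2-cycles. *)
Definition mutate n (j : 'I_n) (Q : quiver n) : quiver n :=
  fun a b =>
    if (a == j) || (b == j) then Q b a
    else (Q a b + Q a j * Q j b) - (Q b a + Q b j * Q j a).

Definition mutate_seq n (Q : quiver n) (s : seq 'I_n) : quiver n :=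
  foldl (fun Q' j => mutate j Q') Q s.

(* Q^{(i)}_M for an infinite sequence M, where m_{i+1} = M i *)
Fixpoint mseq n (Q : quiver n) (M : nat -> 'I_n) (i : nat) : quiver n :=
  match i with
  | 0 => Q
  | i'.+1 => mutate (M i') (mseq Q M i')
  end.

Definition reduced n (M : nat -> 'I_n) : Prop := forall i, M i != M i.+1.

Definition mutation_abundant n (Q : quiver n) : Prop :=
  forall (s : seq 'I_n) (i j : 'I_n), i != j ->
    2 <= mutate_seq Q s i j + mutate_seq Q s j i.

Definition arrow_rel_on n (Q : quiver n) (S : {set 'I_n}) : rel 'I_n :=
  fun a b => [&& a \in S, b \in S & 0 < Q a b].

Definition acyclic_on n (Q : quiver n) (S : {set 'I_n}) : Prop :=
  forall a b, arrow_rel_on Q S a b -> ~~ connect (arrow_rel_on Q S) b a.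

Definition acyclic n (Q : quiver n) : Prop := acyclic_on Q setT.

Definition oriented_3cycle_on n (Q : quiver n) (i j k : 'I_n) : Prop :=
  [/\ i != j, j != k, i != k & ~ acyclic_on Q [set i; j; k]].

Definition cycle_preserving n (Q : quiver n) (j : 'I_n) : Prop :=
  forall i k, oriented_3cycle_on Q i j k -> oriented_3cycle_on (mutate j Q) i j k.

Definition is_source n (Q : quiver n) (j : 'I_n) : Prop := forall i, Q i j = 0.
Definition is_sink n (Q : quiver n) (j : 'I_n) : Prop := forall k, Q j k = 0.

(* Main.v *)
Require Import Defs.
From mathcomp Require Import all_boot.
From mathcomp Require Import zify.
From Stdlib Require Import Classical.
Set Implicit Arguments. Unset Strict Implicit. Unset Printing Implicit Defensive.

Definition cyc3 n (Q : quiver n) a b c := [/\ 0 < Q a b, 0 < Q b c & 0 < Q c a].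
Definition ab n (Q : quiver n) := forall x y, x != y -> 2 <= Q x y + Q y x.

Lemma in3 (x y z v : 'I_3) : x != y -> y != z -> x != z -> [\/ v = x, v = y | v = z].
Proof.
case: x y z v => [x Hx] [y Hy] [z Hz] [v Hv].
rewrite -!val_eqE /= => /eqP H1 /eqP H2 /eqP H3.
have : v = x \/ v = y \/ v = z by lia.
case=> [E|[E|E]]; subst.
- by apply: Or31; apply: val_inj.
- by apply: Or32; apply: val_inj.
- by apply: Or33; apply: val_inj.
Qed.

Lemma mut_j1 n (Q : quiver n) j x : mutate j Q j x = Q x j.
Proof. by rewrite /mutate eqxx. Qed.
Lemma mut_j2 n (Q : quiver n) j x : mutate j Q x j = Q j x.
Proof. by rewrite /mutate eqxx orbT. Qed.
Lemma mut_xy n (Q : quiver n) j x y : x != j -> y != j ->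
  mutate j Q x y = (Q x y + Q x j * Q j y) - (Q y x + Q y j * Q j x).
Proof. by move=> Hx Hy; rewrite /mutate (negbTE Hx) (negbTE Hy). Qed.

Lemma wf_mut n (Q : quiver n) j : wf_quiver Q -> wf_quiver (mutate j Q).
Proof.
case=> H0 H1; split.
- move=> i; rewrite /mutate; case: ifP => _; first exact: H0.
  by rewrite subnn.
- move=> a b; rewrite /mutate orbC; case: ifP => _.
  + by case: (H1 a b) => ->; [right|left].
  + set u := _ + _; set v := _ + _.
    case: (leqP u v) => h; [left|right]; apply/eqP; rewrite subn_eq0 //.
    exact: ltnW.
Qed.

Lemma cyc_dist n (Q : quiver n) a b c : wf_quiver Q -> cyc3 Q a b c ->
  [/\ a != b, b != c & a != c].
Proof.
case=> H0 _ [h1 h2 h3]; split; apply/eqP=> E; subst.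
- by rewrite H0 in h1.
- by rewrite H0 in h2.
- by rewrite H0 in h3.
Qed.

Lemma cyc_rot n (Q : quiver n) a b c : cyc3 Q a b c -> cyc3 Q b c a.
Proof. by case. Qed.

Lemma cyc_vertex (Q : quiver 3) a b c v : wf_quiver Q -> cyc3 Q a b c ->
  (exists w, 0 < Q v w) /\ (exists w, 0 < Q w v).
Proof.
move=> W C; have [d1 d2 d3] := cyc_dist W C; case: C => h1 h2 h3.
by case: (in3 v d1 d2 d3) => ->; split; eexists; eassumption.
Qed.

Lemma cyc_not_acyc n (Q : quiver n) a b c : cyc3 Q a b c -> ~ acyclic Q.
Proof.
case=> h1 h2 h3 A.
have R : arrow_rel_on Q setT a b by rewrite /arrow_rel_on !inE h1.
have := A a b R; apply/negP; rewrite negbK.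
apply: (connect_trans (y := c)); apply: connect1; by rewrite /arrow_rel_on !inE.
Qed.

Lemma connect_rank (T : finType) (e : rel T) (f : T -> nat) x y :
  (forall x y, e x y -> f x < f y) -> connect e x y -> f x <= f y.
Proof.
move=> H /connectP [p Hp ->]; elim: p x Hp => //= z p IH x /andP [Hxz Hp].
exact: leq_trans (ltnW (H _ _ Hxz)) (IH _ Hp).
Qed.

Lemma acyc_of_nocyc n (Q : quiver n) : wf_quiver Q -> ab Q ->
  (forall a b c, ~ cyc3 Q a b c) -> acyclic Q.
Proof.
move=> [H0 H1] Ab NC.
pose f x := #|[set y | 0 < Q y x]|.
have Hf : forall x y, arrow_rel_on Q setT x y -> f x < f y.
  move=> x y; rewrite /arrow_rel_on !inE /= => hxy.
  apply: proper_card; apply/properP; split.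
  - apply/subsetP => z; rewrite !inE => hzx.
    have zy : z != y.
      apply/eqP=> E; subst z; case: (H1 x y) => E; by rewrite E in hxy hzx.
    have := Ab _ _ zy; case: (H1 z y) => E; rewrite E.
      rewrite add0n => h; exfalso; apply: (NC x y z); split => //.
      exact: ltnW.
    by rewrite addn0 => /ltnW.
  - by exists x; rewrite !inE ?hxy // H0.
move=> a b R; apply/negP => C.
have := connect_rank Hf C; have := Hf _ _ R; lia.
Qed.

Lemma acyc_sub n (Q : quiver n) S : acyclic Q -> acyclic_on Q S.
Proof.
move=> A a b R; apply/negP => C.
have sub : subrel (arrow_rel_on Q S) (arrow_rel_on Q setT).
  by move=> x y; rewrite /arrow_rel_on !inE => /and3P [_ _ ->].
have R' := sub _ _ R.
have := A a b R'; move/negP; apply.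
apply: (connect_sub (e := arrow_rel_on Q S)) C => x y /sub; exact: connect1.
Qed.

Lemma set3 (i j k : 'I_3) : i != j -> j != k -> i != k -> [set i; j; k] = setT.
Proof.
move=> d1 d2 d3; apply/setP => x; rewrite !inE.
by case: (in3 x d1 d2 d3) => ->; rewrite eqxx ?orbT.
Qed.

Lemma src_acyc (Q : quiver 3) j : wf_quiver Q -> ab (mutate j Q) ->
  (forall w, Q w j = 0) \/ (forall w, Q j w = 0) -> acyclic (mutate j Q).
Proof.
move=> W A S; apply: acyc_of_nocyc => //; first exact: wf_mut.
move=> a b c C; have [[w1 h1] [w2 h2]] := cyc_vertex j (wf_mut j W) C.
case: S => S.
- by rewrite mut_j1 S in h1.
- by rewrite mut_j2 S in h2.
Qed.

Lemma grow (Q : quiver 3) a j c : wf_quiver Q -> cyc3 Q a j c ->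
  Q c a < Q a j * Q j c ->
  cyc3 (mutate j Q) c j a /\ mutate j Q a c = Q a j * Q j c - Q c a.
Proof.
move=> W C h; have [d1 d2 d3] := cyc_dist W C.
case: W => H0 H1; case: C => h1 h2 h3.
have e1 : Q a c = 0 by case: (H1 a c) => // E; rewrite E in h3.
have e2 : Q c j = 0 by case: (H1 c j) => // E; rewrite E in h2.
have Ea : mutate j Q a c = Q a j * Q j c - Q c a.
  rewrite mut_xy // ?(eq_sym c) // e1 e2; lia.
split => //; split; rewrite ?mut_j1 ?mut_j2 ?Ea //; lia.
Qed.

Definition Pm (Q : quiver 3) u :=
  exists a c, [/\ cyc3 Q a u c, Q a u <= Q c a & Q u c <= Q c a].

Lemma abpos (Q : quiver 3) x y : wf_quiver Q -> ab Q -> 0 < Q x y -> 2 <= Q x y.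
Proof.
case=> H0 H1 A h; have xy : x != y by apply/eqP => E; subst; rewrite H0 in h.
have := A _ _ xy; case: (H1 x y) => E; first by rewrite E in h.
by rewrite E addn0.
Qed.

Lemma Pm_step (Q : quiver 3) u v : wf_quiver Q -> ab Q -> Pm Q u -> v != u ->
  Pm (mutate v Q) v.
Proof.
move=> W A [a [c [C l1 l2]]] vu.
have [d1 d2 d3] := cyc_dist W C.
have [h1 h2 h3] := C.
have p2 := abpos W A h1; have q2 := abpos W A h2; have r2 := abpos W A h3.
case: (in3 v d1 d2 d3) => E; subst v.
- have C' : cyc3 Q c a u by do 2 apply: cyc_rot.
  have [C2 E2] := grow W C' ltac:(nia).
  exists u, c; split.
  + exact: C2.
  + rewrite mut_j2 E2; nia.
  + rewrite mut_j1 E2; nia.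
- by rewrite eqxx in vu.
- have C' : cyc3 Q u c a by apply: cyc_rot.
  have [C2 E2] := grow W C' ltac:(nia).
  exists a, u; split.
  + exact: C2.
  + rewrite mut_j2 E2; nia.
  + rewrite mut_j1 E2; nia.
Qed.

Lemma cyc_step (Q : quiver 3) a j c : wf_quiver Q -> ab Q -> ab (mutate j Q) ->
  cyc3 Q a j c ->
  [\/ Pm (mutate j Q) j, acyclic (mutate j Q) |
   [/\ cyc3 (mutate j Q) c j a, mutate j Q c j < Q c a,
       mutate j Q j a < Q c a & mutate j Q a c < Q c a]].
Proof.
move=> W A A' C; have [d1 d2 d3] := cyc_dist W C.
have [h1 h2 h3] := C.
have p2 := abpos W A h1; have q2 := abpos W A h2; have r2 := abpos W A h3.
have W' := wf_mut j W.
case: (W) => H0 H1.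
have e1 : Q a c = 0 by case: (H1 a c) => // E; rewrite E in h3.
have e2 : Q c j = 0 by case: (H1 c j) => // E; rewrite E in h2.
have e3 : Q j a = 0 by case: (H1 j a) => // E; rewrite E in h1.
have Eac : mutate j Q a c = Q a j * Q j c - Q c a.
  rewrite mut_xy // ?(eq_sym c) // e1 e2; lia.
have Eca : mutate j Q c a = Q c a - Q a j * Q j c.
  rewrite mut_xy // ?(eq_sym c) // e1 e2 e3; lia.
case: (ltngtP (Q a j * Q j c) (Q c a)) => hr.
- apply: Or32; apply: acyc_of_nocyc => // x y z Cx.
  have [_ [w hw]] := cyc_vertex c W' Cx.
  case: (in3 w d1 d2 d3) => E; subst w.
  + by rewrite Eac in hw; lia.
  + by rewrite mut_j1 e2 in hw.
  + by case: W' => H0' _; rewrite H0' in hw.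
- have [C2 _] := grow W C hr.
  case: (leqP (Q a j) (Q a j * Q j c - Q c a)) => l1;
  case: (leqP (Q j c) (Q a j * Q j c - Q c a)) => l2.
  + apply: Or31; exists c, a; split => //; rewrite ?mut_j1 ?mut_j2 Eac //.
  + apply: Or33; split; rewrite ?mut_j1 ?mut_j2 ?Eac //; nia.
  + apply: Or33; split; rewrite ?mut_j1 ?mut_j2 ?Eac //; nia.
  + apply: Or33; split; rewrite ?mut_j1 ?mut_j2 ?Eac //; nia.
- have := A' _ _ d3; rewrite Eac Eca hr subnn; lia.
Qed.

Lemma acyc_step (Q : quiver 3) j : wf_quiver Q -> ab Q -> acyclic Q ->
  [\/ (forall w, Q w j = 0), (forall w, Q j w = 0) | Pm (mutate j Q) j].
Proof.
move=> W A Ac.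
case: (classic (forall w, Q w j = 0)) => S1; first exact: Or31.
case: (classic (forall w, Q j w = 0)) => S2; first exact: Or32.
apply: Or33.
have [a ha] : exists a, 0 < Q a j.
  apply: NNPP => N; apply: S1 => w; apply/eqP; rewrite -leqn0 leqNgt.
  by apply/negP => h; apply: N; exists w.
have [c hc] : exists c, 0 < Q j c.
  apply: NNPP => N; apply: S2 => w; apply/eqP; rewrite -leqn0 leqNgt.
  by apply/negP => h; apply: N; exists w.
case: (W) => H0 H1.
have aj : a != j by apply/eqP => E; subst; rewrite H0 in ha.
have jc : j != c by apply/eqP => E; subst; rewrite H0 in hc.
have ac : a != c by apply/eqP => E; subst; case: (H1 c j) => E; rewrite E in ha hc.
have e1 : Q c a = 0.
  case: (posnP (Q c a)) => // hp; exfalso; apply: (cyc_not_acyc _ Ac).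
  by split; [exact ha | exact hc | exact hp].
have e2 : Q c j = 0 by case: (H1 c j) => // E; rewrite E in hc.
have e3 : Q j a = 0 by case: (H1 j a) => // E; rewrite E in ha.
have Eac : mutate j Q a c = Q a c + Q a j * Q j c.
  rewrite mut_xy // ?(eq_sym c) // e1 e2; lia.
exists c, a; split; rewrite ?mut_j1 ?mut_j2 ?Eac //; try nia.
split; rewrite ?mut_j1 ?mut_j2 ?Eac //; nia.
Qed.

Lemma cyc_at (Q : quiver 3) a b c j N : wf_quiver Q -> cyc3 Q a b c ->
  Q a b < N -> Q b c < N -> Q c a < N ->
  exists a' c', [/\ cyc3 Q a' j c', Q a' j < N, Q j c' < N & Q c' a' < N].
Proof.
move=> W C h1 h2 h3; have [d1 d2 d3] := cyc_dist W C.
case: (in3 j d1 d2 d3) => ->.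
- by exists c, b; split => //; do 2 apply: cyc_rot.
- by exists a, c.
- by exists b, a; split => //; apply: cyc_rot.
Qed.

Theorem mainTheorem16 (Q : quiver 3) (M : nat -> 'I_3) :
  wf_quiver Q -> mutation_abundant Q -> reduced M ->
  ( ( (exists N, forall i, N <= i -> acyclic (mseq Q M i))
      /\ (exists N, forall i, N <= i ->
            is_source (mseq Q M i) (M i) \/ is_sink (mseq Q M i) (M i))
      /\ ~ (exists N, forall i, N <= i -> ~ acyclic (mseq Q M i)) )
    \/
    ( (exists N, forall i, N <= i -> ~ acyclic (mseq Q M i))
      /\ ~ (exists N, forall i, N <= i -> acyclic (mseq Q M i)) ) )
  /\ (exists i0, forall i, i0 <= i -> cycle_preserving (mseq Q M i) (M i)).
Proof.
move=> W Ab Red.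
have Wi : forall i, wf_quiver (mseq Q M i) by elim => //= i IH; exact: wf_mut.
have Ei : forall i, mseq Q M i = mutate_seq Q (mkseq M i).
  by elim => // i IH; rewrite mkseqS /mutate_seq foldl_rcons -/(mutate_seq Q _) -IH.
have Ai : forall i, ab (mseq Q M i) by move=> i x y; rewrite Ei; exact: Ab.
have NCac : forall i, ~ acyclic (mseq Q M i) ->
    exists a b c, cyc3 (mseq Q M i) a b c.
  move=> i NA; apply: NNPP => N; apply: NA; apply: acyc_of_nocyc => // a b c C.
  by apply: N; exists a, b, c.
have CP : forall i, acyclic (mseq Q M i) \/ ~ acyclic (mseq Q M i.+1) ->
    cycle_preserving (mseq Q M i) (M i).
  move=> i H x z [d1 d2 d3 NA].
  case: H => Hc; first by exfalso; apply: NA; exact: acyc_sub.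
  split => //; rewrite set3 //.
case: (classic (exists i, Pm (mseq Q M i.+1) (M i))) => [[i Hi]|NP].
- have All : forall d, Pm (mseq Q M (i + d).+1) (M (i + d)).
    elim => [|d IH]; first by rewrite addn0.
    rewrite addnS; apply: (Pm_step (Wi _) (Ai _) IH).
    by rewrite eq_sym; apply: Red.
  have NA : forall k, i < k -> ~ acyclic (mseq Q M k).
    move=> k hk; have := All (k - i.+1).
    rewrite (_ : (i + (k - i.+1)).+1 = k); last by lia.
    by case=> a [c [C _ _]]; exact: cyc_not_acyc C.
  split.
  + right; split; first by exists i.+1.
    case=> N HN; apply: (NA (maxn N i.+1)); first by lia.
    by apply: HN; lia.
  + by exists i => k hk; apply: CP; right; apply: NA; lia.
- have NP' : forall i, ~ Pm (mseq Q M i.+1) (M i) by move=> i P; apply: NP; exists i.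
  have Cl : forall n i a b c, cyc3 (mseq Q M i) a b c ->
      mseq Q M i a b < n -> mseq Q M i b c < n -> mseq Q M i c a < n ->
      exists N, acyclic (mseq Q M N).
    elim => [|n IH] i a b c C h1 h2 h3; first by [].
    have [a' [c' [C' l1 l2 l3]]] := cyc_at (M i) (Wi i) C h1 h2 h3.
    case: (cyc_step (Wi i) (Ai i) (Ai i.+1) C') => [P|Ac|[C2 m1 m2 m3]].
    + by exfalso; apply: (NP' i).
    + by exists i.+1.
    + apply: (IH i.+1 c' (M i) a' C2); simpl; lia.
  have [N0 H0] : exists N, acyclic (mseq Q M N).
    case: (classic (acyclic (mseq Q M 0))) => H; first by exists 0.
    have [a [b [c C]]] := NCac 0 H.
    apply: (Cl (mseq Q M 0 a b + mseq Q M 0 b c + mseq Q M 0 c a).+1 0 a b c C);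
      simpl; lia.
  have All : forall d, acyclic (mseq Q M (N0 + d)).
    elim => [|d IH]; first by rewrite addn0.
    rewrite addnS /=.
    case: (acyc_step (M (N0 + d)) (Wi _) (Ai _) IH) => [S|S|P].
    + by apply: src_acyc (Wi _) (Ai (N0 + d).+1) _; left.
    + by apply: src_acyc (Wi _) (Ai (N0 + d).+1) _; right.
    + by exfalso; apply: (NP' (N0 + d)).
  have Ak : forall k, N0 <= k -> acyclic (mseq Q M k).
    by move=> k hk; rewrite -(subnKC hk); apply: All.
  split.
  + left; split; first by exists N0.
    split.
    * exists N0 => k hk.
      case: (acyc_step (M k) (Wi _) (Ai _) (Ak _ hk)) => [S|S|P].
      -- by left.
      -- by right.
      -- by exfalso; apply: (NP' k).
    * case=> N HN; apply: (HN (maxn N N0)); first by lia.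
      by apply: Ak; lia.
  + by exists N0 => k hk; apply: CP; left; apply: Ak.
Qed.
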